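(* Assume (R) and (F), and assume $0<q_t<1$ for all $t=0,\dots,T-1$. For $\alpha\in(0,\infty)^T$ let $H_\alpha(Z)$ denote the indifference price of $Z$ for the utilities $u_t(x;\alpha)=\frac{1}{\alpha_t}[1-\exp(-\alpha_tx)]$. Let $Z\in L^\infty$ with representation $Z=\sum_{t=1}^Tz_t1_{(t-1<\tau\le t)}+z_{T+1}1_{(T<\tau)}$ and set $H_\infty(Z)=\max\{z_1,\dots,z_{T+1}\}$. Then: (a) $E[Z]\le H_\alpha(Z)\le H_\infty(Z)$ for all $\alpha\in(0,\infty)^T$; (b) $H_\alpha(Z)\to E[Z]$ as $\alpha\to0+$ (i.e. $\alpha_t\to0+$ for all $t$); (c) $H_\alpha(Z)\to H_\infty(Z)$ as $\alpha\to\infty$ (i.e. $\alpha_t\to\infty$ for all $t$); (d) for every $\pi\in(E[Z],H_\infty(Z))$ and every $\alpha=(\alpha_1,\dots,\alpha_T)\in(0,\infty)^T$ there exists $p\in(0,\infty)$ with $\pi=H_{p\alpha}(Z)$, where $p\alpha=(p\alpha_1,\dots,p\alpha_T)$.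
   Context: Let $T\ge1$, $\mathbb{T}=\{1,\dots,T\}$, and $(\Omega,\mathcal{F},P)$ a probability space carrying a random variable $\tau$ with $\tau(\omega)>0$ for all $\omega$ and $P(\tau=s)=0$ for all $s\in[0,\infty)$. Let $D_t=1_{(\tau\le t)}$ for $t=0,\dots,T$ and $\mathcal{H}_t=\sigma(D_s:s=0,\dots,t)$. Condition (F): the filtration is $\mathcal{F}_t=\mathcal{H}_t$; $L^\infty=L^\infty(\Omega,\mathcal{F}_T,P)$. Condition (R): the interest rates $r_t\ge0$ are deterministic; $B_0=1$, $B_t=\prod_{k=1}^t(1+r_k)$, $\tilde X_t=X_t/B_t$. For $W\in L^\infty$, $\mathcal{A}(W)$ is the set of adapted processes $(Y_t)_{t\in\mathbb{T}}$ with $Y_t\in L^\infty$ and $\sum_t\tilde Y_t=W$ a.s.; $U_\alpha(W)=\sup\{\sum_tE[u_t(\tilde Y_t;\alpha)]:(Y_t)\in\mathcal{A}(W)\}$; the indifference price $H_\alpha(Z)$ (with initial wealth $w$; it does not depend on $w$) is the real number with $U_\alpha(w+H_\alpha(Z)-Z)=U_\alpha(w)$. Let $q_t=P(\tau\le t+1\mid\tau>t)$, $p_t=1-q_t$ for $t=0,\dots,T-1$. *)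

(* Defs.v *)
From Stdlib Require Import Reals Lra Lia ClassicalEpsilon.
Open Scope R_scope.

(* Finite-atom model of the setting under condition (F).
   Atom k (1 <= k <= T) is the event (k-1 < tau <= k); atom T+1 is (tau > T).
   Since tau > 0 and F_T = H_T = sigma(D_0..D_T), every element of
   L^infty(F_T) is (a.s.) a function of the atom index, and only the
   probabilities P k of the atoms matter.  Random variables are thus
   functions nat -> R evaluated at k = 1..T+1. *)

Fixpoint sum_1n (n : nat) (f : nat -> R) : R :=
  match n with
  | O => 0
  | S n' => sum_1n n' f + f n
  end.

Fixpoint prod_1n (n : nat) (f : nat -> R) : R :=
  match n with
  | O => 1
  | S n' => prod_1n n' f * f n
  end.

Definition is_atom_law (T : nat) (P : nat -> R) : Prop :=
  (forall k, (1 <= k <= T + 1)%nat -> 0 <= P k) /\ sum_1n (T + 1) P = 1.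

(* survival probability P(tau > t) = P(atoms k > t) *)
Definition surv (T : nat) (P : nat -> R) (t : nat) : R := 1 - sum_1n t P.

(* q_t = P(tau <= t+1 | tau > t) = P(t < tau <= t+1) / P(tau > t) *)
Definition qprob (T : nat) (P : nat -> R) (t : nat) : R :=
  P (S t) / surv T P t.

Definition Expect (T : nat) (P : nat -> R) (X : nat -> R) : R :=
  sum_1n (T + 1) (fun k => P k * X k).

Definition Bdisc (r : nat -> R) (t : nat) : R := prod_1n t (fun k => 1 + r k).

Definition uexp (alpha : nat -> R) (t : nat) (x : R) : R :=
  / alpha t * (1 - exp (- alpha t * x)).

(* Y : time -> atom -> R is adapted to (H_t): Y_t is H_t-measurable, i.e.
   it distinguishes the atoms k <= t individually and is constant on {tau > t}
   = {k > t}. (Bounded automatically: finitely many atoms.) *)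
Definition adapted (T : nat) (Y : nat -> nat -> R) : Prop :=
  forall t k k', (1 <= t <= T)%nat -> (1 <= k <= T + 1)%nat ->
    (1 <= k' <= T + 1)%nat -> (t < k)%nat -> (t < k')%nat -> Y t k = Y t k'.

Definition budget (T : nat) (P : nat -> R) (r : nat -> R)
    (Y : nat -> nat -> R) (W : nat -> R) : Prop :=
  forall k, (1 <= k <= T + 1)%nat -> 0 < P k ->
    sum_1n T (fun t => Y t k / Bdisc r t) = W k.

Definition exp_util (T : nat) (P : nat -> R) (r : nat -> R) (alpha : nat -> R)
    (Y : nat -> nat -> R) : R :=
  sum_1n T (fun t => Expect T P (fun k => uexp alpha t (Y t k / Bdisc r t))).

Definition attainable (T : nat) (P : nat -> R) (r : nat -> R) (alpha : nat -> R)
    (W : nat -> R) (v : R) : Prop :=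
  exists Y, adapted T Y /\ budget T P r Y W /\ v = exp_util T P r alpha Y.

Definition Uval (T : nat) (P : nat -> R) (r : nat -> R) (alpha : nat -> R)
    (W : nat -> R) : R :=
  epsilon (inhabits 0) (fun u => is_lub (attainable T P r alpha W) u).

Definition Hprice (T : nat) (P : nat -> R) (r : nat -> R) (alpha : nat -> R)
    (w : R) (Z : nat -> R) : R :=
  epsilon (inhabits 0) (fun h =>
    Uval T P r alpha (fun k => w + h - Z k) = Uval T P r alpha (fun _ => w)).

Fixpoint max_1n (n : nat) (f : nat -> R) : R :=
  match n with
  | O => f O (* unused for n >= 1 *)
  | S O => f 1%nat
  | S n' => Rmax (max_1n n' f) (f n)
  end.

Definition Hinf (T : nat) (Z : nat -> R) : R := max_1n (T + 1) Z.

(* Main.v *)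
Require Import Defs.
From Stdlib Require Import Reals Lra Lia ClassicalEpsilon FunctionalExtensionality Ranalysis5.
Open Scope R_scope.

Lemma exp_le' x y : x <= y -> exp x <= exp y.
Proof. intros [H|H]; [left; apply exp_increasing; auto | subst; lra]. Qed.
Lemma ln_le' x y : 0 < x -> x <= y -> ln x <= ln y.
Proof. intros Hx [H|H]; [left; apply ln_increasing; auto | subst; lra]. Qed.

Lemma s1_ext n f g : (forall k, (1 <= k <= n)%nat -> f k = g k) -> sum_1n n f = sum_1n n g.
Proof. induction n; simpl; intros H; auto. rewrite IHn by (intros; apply H; lia). rewrite (H (S n)) by lia. auto. Qed.
Lemma s1_le n f g : (forall k, (1 <= k <= n)%nat -> f k <= g k) -> sum_1n n f <= sum_1n n g.
Proof. induction n; simpl; intros H; [lra|]. pose proof (H (S n) ltac:(lia)). pose proof (IHn ltac:(intros; apply H; lia)). lra. Qed.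
Lemma s1_plus n f g : sum_1n n (fun k => f k + g k) = sum_1n n f + sum_1n n g.
Proof. induction n; simpl; [lra|]. rewrite IHn; lra. Qed.
Lemma s1_scal n c f : sum_1n n (fun k => c * f k) = c * sum_1n n f.
Proof. induction n; simpl; [lra|]. rewrite IHn; lra. Qed.
Lemma s1_zero n : sum_1n n (fun _ => 0) = 0.
Proof. induction n; simpl; [lra|]. rewrite IHn; lra. Qed.
Lemma s1_const n c : sum_1n n (fun _ => c) = INR n * c.
Proof. induction n; simpl sum_1n; [simpl; lra|]. rewrite IHn, S_INR; lra. Qed.
Lemma s1_swap n m (f : nat -> nat -> R) :
  sum_1n n (fun t => sum_1n m (fun k => f t k)) = sum_1n m (fun k => sum_1n n (fun t => f t k)).
Proof. induction n; simpl. - symmetry; apply s1_zero. - rewrite IHn, <- s1_plus. auto. Qed.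
Lemma s1_nonneg n f : (forall k, (1 <= k <= n)%nat -> 0 <= f k) -> 0 <= sum_1n n f.
Proof. intros H. rewrite <- (s1_zero n). apply s1_le; auto. Qed.
Lemma s1_ge_term n f j : (forall k, (1 <= k <= n)%nat -> 0 <= f k) -> (1 <= j <= n)%nat -> f j <= sum_1n n f.
Proof. induction n; simpl; intros H Hj; [lia|].
  destruct (Nat.eq_dec j (S n)). - subst. pose proof (s1_nonneg n f ltac:(intros; apply H; lia)). lra.
  - pose proof (H (S n) ltac:(lia)). pose proof (IHn ltac:(intros; apply H; lia) ltac:(lia)). lra. Qed.
Lemma s1_last n f : (1 <= n)%nat -> (forall k, (1 <= k < n)%nat -> f k = 0) -> sum_1n n f = f n.
Proof. intros Hn H. destruct n; [lia|]. simpl. rewrite (s1_ext n f (fun _ => 0)), s1_zero by (intros; apply H; lia). lra. Qed.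

Definition good T P r := (1 <= T)%nat /\ (forall k, (1 <= k <= T + 1)%nat -> 0 < P k) /\
  sum_1n (T + 1) P = 1 /\ (forall t, (1 <= t <= T)%nat -> 0 < Bdisc r t).
Definition posa T (alpha : nat -> R) := forall t, (1 <= t <= T)%nat -> 0 < alpha t.
Definition Kinv T (alpha : nat -> R) := sum_1n T (fun t => / alpha t).
Definition loss T P r alpha Y := sum_1n T (fun t => Expect T P (fun k =>
   / alpha t * exp (- alpha t * (Y t k / Bdisc r t)))).

Lemma Expect_ext T P f g : (forall k, (1 <= k <= T+1)%nat -> f k = g k) -> Expect T P f = Expect T P g.
Proof. intros H; unfold Expect; apply s1_ext; intros; rewrite H; auto. Qed.
Lemma Expect_le T P f g : (forall k, (1 <= k <= T+1)%nat -> 0 <= P k) ->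
  (forall k, (1 <= k <= T+1)%nat -> f k <= g k) -> Expect T P f <= Expect T P g.
Proof. intros HP H; unfold Expect; apply s1_le; intros. apply Rmult_le_compat_l; auto. Qed.
Lemma Expect_scal T P c f : Expect T P (fun k => c * f k) = c * Expect T P f.
Proof. unfold Expect. rewrite <- s1_scal. apply s1_ext; intros; ring. Qed.
Lemma Expect_plus T P f g : Expect T P (fun k => f k + g k) = Expect T P f + Expect T P g.
Proof. unfold Expect. rewrite <- s1_plus. apply s1_ext; intros; ring. Qed.
Lemma Expect_const T P c : sum_1n (T+1) P = 1 -> Expect T P (fun _ => c) = c.
Proof. intros H. unfold Expect. rewrite (s1_ext _ _ (fun k => c * P k)) by (intros; ring).
  rewrite s1_scal, H; ring. Qed.

Lemma util_loss T P r alpha Y : sum_1n (T+1) P = 1 ->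
  exp_util T P r alpha Y = Kinv T alpha - loss T P r alpha Y.
Proof. intros HP. unfold exp_util, Kinv, loss.
  rewrite (s1_ext _ (fun t => Expect T P _) (fun t => / alpha t + (-1) * Expect T P (fun k =>
   / alpha t * exp (- alpha t * (Y t k / Bdisc r t))))).
  - rewrite s1_plus, s1_scal; ring.
  - intros t _. rewrite <- (Expect_const T P (/ alpha t)) at 1 by auto. rewrite <- Expect_scal, <- Expect_plus.
    apply Expect_ext; intros; unfold uexp. ring.
Qed.

Lemma exp_util_swap T P r alpha Y : exp_util T P r alpha Y =
  sum_1n (T+1) (fun k => P k * sum_1n T (fun t => uexp alpha t (Y t k / Bdisc r t))).
Proof. unfold exp_util, Expect. rewrite s1_swap. apply s1_ext; intros. rewrite <- s1_scal. auto. Qed.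

Lemma loss_nonneg T P r alpha Y : good T P r -> posa T alpha -> 0 <= loss T P r alpha Y.
Proof. intros (HT & HP & _) Ha. unfold loss. apply s1_nonneg; intros t Ht.
  unfold Expect; apply s1_nonneg; intros k Hk. pose proof (HP k Hk). pose proof (Ha t Ht).
  pose proof (exp_pos (- alpha t * (Y t k / Bdisc r t))).
  apply Rmult_le_pos; [lra|]. apply Rmult_le_pos; [left; apply Rinv_0_lt_compat; lra|lra]. Qed.

Definition Y0 T r (W : nat -> R) := fun t k => if Nat.eqb t T then Bdisc r T * W k else 0.

Lemma Y0_attain T P r alpha W : good T P r ->
  attainable T P r alpha W (Expect T P (fun k => uexp alpha T (W k))).
Proof. intros (HT & HP & HS & HB). exists (Y0 T r W). split; [|split].
  - intros t k k' Ht Hk Hk' H1 H2. unfold Y0. destruct (Nat.eqb_spec t T); auto.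
    subst. replace k with (T+1)%nat by lia. replace k' with (T+1)%nat by lia. auto.
  - intros k Hk _. rewrite s1_last; [| auto | ].
    2:{ intros t Ht; unfold Y0; destruct (Nat.eqb_spec t T); [lia|]; unfold Rdiv; ring. }
    unfold Y0. rewrite Nat.eqb_refl. pose proof (HB T ltac:(lia)). field. lra.
  - unfold exp_util. rewrite s1_last. + unfold Y0; rewrite Nat.eqb_refl. apply Expect_ext; intros.
      pose proof (HB T ltac:(lia)). f_equal. field. lra.
    + auto.
    + intros t Ht. unfold Y0. destruct (Nat.eqb_spec t T); [lia|].
      rewrite (Expect_ext _ _ _ (fun _ => 0)). * unfold Expect. rewrite (s1_ext _ _ (fun _ => 0)) by (intros; ring). apply s1_zero.
      * intros; unfold uexp. unfold Rdiv. rewrite Rmult_0_l, Rmult_0_r, exp_0. ring.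
Qed.

Lemma attain_le_K T P r alpha W v : good T P r -> posa T alpha -> attainable T P r alpha W v -> v <= Kinv T alpha.
Proof. intros G Ha (Y & _ & _ & ->). pose proof G as (_ & _ & HS & _). rewrite util_loss by auto.
  pose proof (loss_nonneg T P r alpha Y G Ha). lra. Qed.

Lemma Uval_lub T P r alpha W : good T P r -> posa T alpha -> is_lub (attainable T P r alpha W) (Uval T P r alpha W).
Proof. intros G Ha. unfold Uval. apply epsilon_spec.
  destruct (completeness (attainable T P r alpha W)) as [m Hm].
  - exists (Kinv T alpha). intros v Hv. eapply attain_le_K; eauto.
  - eexists. apply Y0_attain; auto.
  - exists m; auto.
Qed.

Lemma Kinv_pos T alpha : (1 <= T)%nat -> posa T alpha -> 0 < Kinv T alpha.
Proof. intros HT Ha. unfold Kinv. destruct T; [lia|]. simpl.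
  pose proof (s1_nonneg T (fun t => / alpha t) ltac:(intros; left; apply Rinv_0_lt_compat; apply Ha; lia)).
  pose proof (Rinv_0_lt_compat (alpha (S T)) (Ha (S T) ltac:(lia))). lra. Qed.

Lemma attain_shift T P r alpha W v c : good T P r -> posa T alpha -> attainable T P r alpha W v ->
  attainable T P r alpha (fun k => W k + c)
    (Kinv T alpha - exp (- c / Kinv T alpha) * (Kinv T alpha - v)).
Proof. intros G Ha (Y & HY1 & HY2 & ->). pose proof G as (HT & HP & HS & HB).
  set (K := Kinv T alpha). assert (HK : 0 < K) by (apply Kinv_pos; auto).
  exists (fun t k => Y t k + Bdisc r t * (c * (/ alpha t / K))). split; [|split].
  - intros t k k' Ht Hk Hk' H1 H2. rewrite (HY1 t k k'); auto.
  - intros k Hk Hpk. rewrite (s1_ext _ _ (fun t => Y t k / Bdisc r t + c / K * / alpha t)).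
    + rewrite s1_plus, s1_scal, HY2 by auto. change (sum_1n T (fun k0 => / alpha k0)) with K. field. lra.
    + intros t Ht. pose proof (HB t Ht). pose proof (Ha t Ht). field. split; lra.
  - rewrite !util_loss by auto. fold K.
    enough (loss T P r alpha (fun t k => Y t k + Bdisc r t * (c * (/ alpha t / K))) =
      exp (- c / K) * loss T P r alpha Y) by lra.
    unfold loss. rewrite <- s1_scal. apply s1_ext.
    intros t Ht. rewrite <- Expect_scal. apply Expect_ext. intros k Hk.
    pose proof (HB t Ht). pose proof (Ha t Ht).
    replace (- alpha t * ((Y t k + Bdisc r t * (c * (/ alpha t / K))) / Bdisc r t))
      with (- alpha t * (Y t k / Bdisc r t) + (- c / K)) by (field; repeat split; lra).
    rewrite exp_plus. ring.
Qed.

Lemma lub_unique E a b : is_lub E a -> is_lub E b -> a = b.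
Proof. intros [Ha1 Ha2] [Hb1 Hb2]. apply Rle_antisym; [apply Ha2 | apply Hb2]; auto. Qed.

Lemma attain_ext T P r alpha W W' v : (forall k, W k = W' k) ->
  attainable T P r alpha W v -> attainable T P r alpha W' v.
Proof. intros H. replace W' with W; auto. apply functional_extensionality; auto. Qed.

Lemma Uval_shift_le T P r alpha W c : good T P r -> posa T alpha ->
  Kinv T alpha - exp (- c / Kinv T alpha) * (Kinv T alpha - Uval T P r alpha W) <=
  Uval T P r alpha (fun k => W k + c).
Proof. intros G Ha. pose proof G as (HT & _). set (K := Kinv T alpha).
  assert (HK : 0 < K) by (apply Kinv_pos; auto).
  destruct (Uval_lub T P r alpha W G Ha) as [_ H1].
  destruct (Uval_lub T P r alpha (fun k => W k + c) G Ha) as [H2 _].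
  set (u := Uval T P r alpha W) in *. set (u' := Uval T P r alpha (fun k => W k + c)) in *.
  assert (u <= K - exp (c / K) * (K - u')).
  { apply H1. intros v Hv. pose proof (H2 _ (attain_shift _ _ _ _ _ _ c G Ha Hv)). fold K in H.
    pose proof (exp_pos (c/K)). 
    assert (exp (c/K) * exp (-c/K) = 1) by (rewrite <- exp_plus; replace (c/K + -c/K) with 0 by (field; lra); apply exp_0).
    assert (exp (c/K) * (K - exp (-c/K) * (K - v)) <= exp (c/K) * u') by (apply Rmult_le_compat_l; lra).
    replace (exp (c/K) * (K - exp (-c/K) * (K - v))) with (exp (c/K) * K - (exp (c/K) * exp (-c/K)) * (K - v)) in H4 by ring.
    rewrite H3 in H4. lra. }
  pose proof (exp_pos (-c/K)).
  assert (exp (c/K) * exp (-c/K) = 1) by (rewrite <- exp_plus; replace (c/K + -c/K) with 0 by (field; lra); apply exp_0).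
  assert (exp (-c/K) * u <= exp (-c/K) * (K - exp (c / K) * (K - u'))) by (apply Rmult_le_compat_l; lra).
  replace (exp (-c/K) * (K - exp (c / K) * (K - u'))) with (exp (-c/K) * K - (exp (c/K) * exp (-c/K)) * (K - u')) in H4 by ring.
  rewrite H3 in H4. lra.
Qed.

Lemma Uval_shift T P r alpha W c : good T P r -> posa T alpha ->
  Uval T P r alpha (fun k => W k + c) =
  Kinv T alpha - exp (- c / Kinv T alpha) * (Kinv T alpha - Uval T P r alpha W).
Proof. intros G Ha. pose proof G as (HT & _). set (K := Kinv T alpha).
  assert (HK : 0 < K) by (apply Kinv_pos; auto).
  pose proof (Uval_shift_le T P r alpha W c G Ha) as H1.
  pose proof (Uval_shift_le T P r alpha (fun k => W k + c) (-c) G Ha) as H2.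
  cbv beta in H2. replace (fun k => W k + c + - c) with W in H2 by (apply functional_extensionality; intros; ring).
  fold K in H1, H2. 
  set (u := Uval T P r alpha W) in *. set (u' := Uval T P r alpha (fun k => W k + c)) in *.
  replace (- - c / K) with (c/K) in H2 by (field; lra).
  pose proof (exp_pos (-c/K)).
  assert (exp (c/K) * exp (-c/K) = 1) by (rewrite <- exp_plus; replace (c/K + -c/K) with 0 by (field; lra); apply exp_0).
  assert (exp (-c/K) * (K - exp (c / K) * (K - u')) <= exp (-c/K) * u) by (apply Rmult_le_compat_l; lra).
  replace (exp (-c/K) * (K - exp (c / K) * (K - u'))) with (exp (-c/K) * K - (exp (c/K) * exp (-c/K)) * (K - u')) in H3 by ring.
  rewrite H0 in H3. lra.
Qed.

Lemma uexp_le a x : 0 < a -> / a * (1 - exp (- a * x)) <= x.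
Proof. intros Ha. pose proof (exp_ineq1_le (- a * x)).
  assert (/ a * (1 - exp (- a * x)) <= / a * (a * x)).
  { apply Rmult_le_compat_l; [left; apply Rinv_0_lt_compat; lra | lra]. }
  replace (/ a * (a * x)) with x in H0 by (field; lra). lra. Qed.
Lemma uexp_le_inv a x : 0 < a -> / a * (1 - exp (- a * x)) <= / a.
Proof. intros Ha. pose proof (exp_pos (- a * x)). pose proof (Rinv_0_lt_compat a Ha).
  assert (/ a * (1 - exp (- a * x)) <= / a * 1) by (apply Rmult_le_compat_l; lra). lra. Qed.

Lemma util_le_EW T P r alpha W v : good T P r -> posa T alpha -> attainable T P r alpha W v ->
  v <= Expect T P W.
Proof. intros G Ha (Y & _ & HB & ->). pose proof G as (HT & HP & _). rewrite exp_util_swap.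
  unfold Expect. apply s1_le. intros k Hk. rewrite <- (HB k Hk (HP k Hk)).
  apply Rmult_le_compat_l; [left; auto|]. apply s1_le. intros t Ht. unfold uexp. apply uexp_le. auto. Qed.

Lemma util_le_single T P r alpha W v j : good T P r -> posa T alpha -> attainable T P r alpha W v ->
  (1 <= j <= T + 1)%nat -> W j <= 0 -> v <= Kinv T alpha - P j * Kinv T alpha.
Proof. intros G Ha (Y & _ & HB & ->) Hj HW. pose proof G as (HT & HP & HS & _). rewrite exp_util_swap.
  set (K := Kinv T alpha).
  set (g := fun k => sum_1n T (fun t => uexp alpha t (Y t k / Bdisc r t))).
  assert (Hg : forall k, (1 <= k <= T+1)%nat -> g k <= K).
  { intros k Hk. unfold g, K, Kinv. apply s1_le. intros t Ht. unfold uexp. apply uexp_le_inv. auto. }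
  assert (Hgj : g j <= 0).
  { unfold g. rewrite <- (HB j Hj (HP j Hj)) in HW. eapply Rle_trans; [|apply HW].
    apply s1_le. intros t Ht. unfold uexp. apply uexp_le. auto. }
  pose proof (s1_ge_term (T+1) (fun k => P k * (K - g k)) j
    ltac:(intros k Hk; pose proof (HP k Hk); pose proof (Hg k Hk); cbv beta; apply Rmult_le_pos; lra) Hj) as H. cbv beta in H.
  rewrite (s1_ext _ _ (fun k => K * P k + (-1) * (P k * g k))) in H by (intros; ring).
  rewrite s1_plus, !s1_scal, HS in H. change (sum_1n (T+1) (fun k => P k * g k) <= K - P j * K). pose proof (HP j Hj). assert (P j * g j <= 0) by nra. lra.
Qed.

Lemma Uval_le T P r alpha W b : good T P r -> posa T alpha ->
  (forall v, attainable T P r alpha W v -> v <= b) -> Uval T P r alpha W <= b.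
Proof. intros G Ha H. destruct (Uval_lub T P r alpha W G Ha) as [_ H2]. apply H2. exact H. Qed.
Lemma Uval_ge T P r alpha W v : good T P r -> posa T alpha ->
  attainable T P r alpha W v -> v <= Uval T P r alpha W.
Proof. intros G Ha H. destruct (Uval_lub T P r alpha W G Ha) as [H1 _]. apply H1. exact H. Qed.

Definition Vz T P r alpha (Z : nat -> R) := Kinv T alpha - Uval T P r alpha (fun k => - Z k).

Lemma UZshift T P r alpha Z c : good T P r -> posa T alpha ->
  Uval T P r alpha (fun k => - Z k + c) = Kinv T alpha - exp (- c / Kinv T alpha) * Vz T P r alpha Z.
Proof. intros G Ha. exact (Uval_shift T P r alpha (fun k => - Z k) c G Ha). Qed.

Lemma U0 T P r alpha : good T P r -> posa T alpha -> Uval T P r alpha (fun _ => 0) = 0.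
Proof. intros G Ha. pose proof G as (HT & HP & HS & _). apply Rle_antisym.
  - apply Uval_le; auto. intros v Hv. pose proof (util_le_EW _ _ _ _ _ _ G Ha Hv).
    rewrite Expect_const in H; auto.
  - pose proof (Uval_ge _ _ _ _ _ _ G Ha (Y0_attain T P r alpha (fun _ => 0) G)).
    unfold uexp in H. rewrite Rmult_0_r, exp_0, Rminus_diag, Rmult_0_r, Expect_const in H; auto.
Qed.

Lemma Uw T P r alpha w : good T P r -> posa T alpha ->
  Uval T P r alpha (fun _ => w) = Kinv T alpha - exp (- w / Kinv T alpha) * Kinv T alpha.
Proof. intros G Ha. pose proof (Uval_shift T P r alpha (fun _ => 0) w G Ha).
  rewrite U0 in H by auto. cbv beta in H. replace (fun _ : nat => 0 + w) with (fun _ : nat => w) in H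
   by (apply functional_extensionality; intros; ring). rewrite H. ring. Qed.

Lemma Vz_lower T P r alpha Z : good T P r -> posa T alpha ->
  exp (Expect T P Z / Kinv T alpha) * Kinv T alpha <= Vz T P r alpha Z.
Proof. intros G Ha. pose proof G as (HT & HP & HS & _).
  set (K := Kinv T alpha). assert (HK : 0 < K) by (apply Kinv_pos; auto).
  assert (Uval T P r alpha (fun k => - Z k + Expect T P Z) <= 0).
  { apply Uval_le; auto. intros v Hv. pose proof (util_le_EW _ _ _ _ _ _ G Ha Hv).
    rewrite Expect_plus, Expect_const in H by auto.
    rewrite (Expect_ext _ _ _ (fun k => (-1) * Z k)), Expect_scal in H by (intros; ring). lra. }
  rewrite UZshift in H by auto. fold K in H. set (V := Vz T P r alpha Z) in *.
  set (m := Expect T P Z / K) in *. 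
  replace (- Expect T P Z / K) with (- m) in H by (unfold m; field; lra).
  rewrite exp_Ropp in H. pose proof (exp_pos m).
  assert (K <= / exp m * V) by lra.
  apply (Rmult_le_compat_l (exp m)) in H1; [|lra].
  rewrite <- Rmult_assoc, Rinv_r, Rmult_1_l in H1; lra.
Qed.

Lemma Vz_pos T P r alpha Z : good T P r -> posa T alpha -> 0 < Vz T P r alpha Z.
Proof. intros G Ha. pose proof (Vz_lower T P r alpha Z G Ha). pose proof G as (HT & _).
  pose proof (Kinv_pos T alpha HT Ha). pose proof (exp_pos (Expect T P Z / Kinv T alpha)). nra. Qed.

Lemma H_formula T P r alpha w Z : good T P r -> posa T alpha ->
  Hprice T P r alpha w Z = Kinv T alpha * ln (Vz T P r alpha Z / Kinv T alpha).
Proof. intros G Ha. pose proof G as (HT & _).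
  set (K := Kinv T alpha). assert (HK : 0 < K) by (apply Kinv_pos; auto).
  pose proof (Vz_pos T P r alpha Z G Ha) as HV. set (V := Vz T P r alpha Z) in *.
  assert (Hiff : forall h, Uval T P r alpha (fun k => w + h - Z k) = Uval T P r alpha (fun _ => w)
     <-> exp (- h / K) * V = K).
  { intros h. replace (fun k => w + h - Z k) with (fun k => - Z k + (w + h))
      by (apply functional_extensionality; intros; ring).
    rewrite UZshift, Uw by auto. fold K. fold V.
    replace (- (w + h) / K) with (- w / K + - h / K) by (field; lra). rewrite exp_plus.
    pose proof (exp_pos (- w / K)). pose proof (exp_pos (- h / K)). split; intros E.
    - apply (Rmult_eq_reg_l (exp (- w / K))); [|lra]. lra.
    - rewrite Rmult_assoc, E. ring. }
  unfold Hprice. set (h := epsilon _ _).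
  assert (Hh : Uval T P r alpha (fun k => w + h - Z k) = Uval T P r alpha (fun _ => w)).
  { unfold h. apply epsilon_spec. exists (K * ln (V / K)). apply Hiff.
    replace (- (K * ln (V / K)) / K) with (- ln (V / K)) by (field; lra).
    rewrite exp_Ropp, exp_ln by (apply Rdiv_lt_0_compat; lra). field. split; lra. }
  apply Hiff in Hh. fold K.
  assert (exp (h / K) = V / K).
  { assert (exp (h / K) * exp (- h / K) = 1) by (rewrite <- exp_plus; replace (h/K + -h/K) with 0 by (field; lra); apply exp_0).
    assert (V / K = exp (h/K) * (exp (- h / K) * V) / K) by (rewrite <- Rmult_assoc, H; field; lra).
    rewrite Hh in H0. rewrite H0. field. lra. }
  rewrite <- H, ln_exp. field. lra.
Qed.

Lemma exp_quad y : y <= 1/2 -> exp y <= 1 + y + 2 * y ^ 2.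
Proof. intros Hy. pose proof (exp_ineq1_le (- y)). pose proof (exp_pos y).
  assert (exp y * exp (- y) = 1) by (rewrite <- exp_plus; replace (y + - y) with 0 by ring; apply exp_0).
  assert (exp y * (1 - y) <= 1) by nra.
  assert (1 <= (1 + y + 2 * y ^ 2) * (1 - y)) by nra. nra. Qed.

Lemma H_ge_E T P r alpha w Z : good T P r -> posa T alpha -> Expect T P Z <= Hprice T P r alpha w Z.
Proof. intros G Ha. pose proof G as (HT & _). rewrite H_formula by auto.
  pose proof (Kinv_pos T alpha HT Ha) as HK. pose proof (Vz_lower T P r alpha Z G Ha).
  set (K := Kinv T alpha) in *. set (V := Vz T P r alpha Z) in *.
  assert (exp (Expect T P Z / K) <= V / K).
  { apply (Rmult_le_reg_r K); auto. unfold Rdiv. rewrite Rmult_assoc, Rinv_l; lra. }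
  apply ln_le' in H0; [|apply exp_pos]. rewrite ln_exp in H0.
  apply (Rmult_le_compat_l K) in H0; [|lra]. replace (K * (Expect T P Z / K)) with (Expect T P Z) in H0 by (field; lra). lra.
Qed.

Lemma H_le_of T P r alpha w Z c eta : good T P r -> posa T alpha -> 0 <= eta ->
  - eta <= Uval T P r alpha (fun k => - Z k + c) -> Hprice T P r alpha w Z <= c + eta.
Proof. intros G Ha He HU. pose proof G as (HT & _). rewrite H_formula by auto.
  pose proof (Kinv_pos T alpha HT Ha) as HK. pose proof (Vz_pos T P r alpha Z G Ha) as HV.
  rewrite UZshift in HU by auto.
  set (K := Kinv T alpha) in *. set (V := Vz T P r alpha Z) in *.
  assert (exp (- c / K) * V <= K + eta) by lra.
  assert (V / K <= exp ((c + eta) / K)).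
  { replace ((c + eta) / K) with (c / K + eta / K) by (field; lra). rewrite exp_plus.
    pose proof (exp_ineq1_le (eta / K)). pose proof (exp_pos (c / K)).
    assert (exp (c/K) * exp (- c / K) = 1) by (rewrite <- exp_plus; replace (c/K + - c/K) with 0 by (field; lra); apply exp_0).
    assert (V = exp (c/K) * (exp (- c / K) * V)) by (rewrite <- Rmult_assoc, H2; ring).
    assert (exp (c/K) * (exp (- c / K) * V) <= exp (c/K) * (K + eta)) by (apply Rmult_le_compat_l; lra).
    assert (exp (c / K) * (K + eta) / K = exp (c/K) * (1 + eta / K)) by (field; lra).
    assert (V / K <= exp (c / K) * (K + eta) / K) by (unfold Rdiv; apply Rmult_le_compat_r; [left; apply Rinv_0_lt_compat|]; lra).
    assert (exp (c/K) * (1 + eta / K) <= exp (c/K) * exp (eta / K)) by (apply Rmult_le_compat_l; lra).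
    lra. }
  apply ln_le' in H0; [|apply Rdiv_lt_0_compat; lra]. rewrite ln_exp in H0.
  apply (Rmult_le_compat_l K) in H0; [|lra]. replace (K * ((c + eta) / K)) with (c + eta) in H0 by (field; lra). lra.
Qed.

Lemma H_ge_of T P r alpha w Z c j : good T P r -> posa T alpha -> (1 <= j <= T + 1)%nat ->
  Uval T P r alpha (fun k => - Z k + c) <= Kinv T alpha - P j * Kinv T alpha ->
  c + Kinv T alpha * ln (P j) <= Hprice T P r alpha w Z.
Proof. intros G Ha Hj HU. pose proof G as (HT & HP & _). rewrite H_formula by auto.
  pose proof (Kinv_pos T alpha HT Ha) as HK. pose proof (Vz_pos T P r alpha Z G Ha) as HV.
  rewrite UZshift in HU by auto. pose proof (HP j Hj) as Hpj.
  set (K := Kinv T alpha) in *. set (V := Vz T P r alpha Z) in *.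
  assert (P j * K <= exp (- c / K) * V) by lra.
  assert (P j * exp (c / K) <= V / K).
  { pose proof (exp_pos (c / K)).
    assert (exp (c/K) * exp (- c / K) = 1) by (rewrite <- exp_plus; replace (c/K + - c/K) with 0 by (field; lra); apply exp_0).
    assert (exp (c/K) * (P j * K) <= exp (c/K) * (exp (- c / K) * V)) by (apply Rmult_le_compat_l; lra).
    replace (exp (c/K) * (exp (- c / K) * V)) with V in H2 by (rewrite <- Rmult_assoc, H1; ring).
    apply (Rmult_le_reg_r K); auto. replace (V / K * K) with V by (field; lra). lra. }
  apply ln_le' in H0; [|pose proof (exp_pos (c/K)); nra]. rewrite ln_mult, ln_exp in H0 by (auto; apply exp_pos).
  apply (Rmult_le_compat_l K) in H0; [|lra]. replace (K * (ln (P j) + c / K)) with (c + K * ln (P j)) in H0 by (field; lra). lra.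
Qed.

Lemma max_ge n f : (1 <= n)%nat -> forall k, (1 <= k <= n)%nat -> f k <= max_1n n f.
Proof. induction n; intros Hn k Hk; [lia|]. destruct n.
  - simpl. replace k with 1%nat by lia. lra.
  - change (max_1n (S (S n)) f) with (Rmax (max_1n (S n) f) (f (S (S n)))).
    destruct (Nat.eq_dec k (S (S n))). + subst. apply Rmax_r.
    + eapply Rle_trans; [apply IHn; lia | apply Rmax_l]. Qed.
Lemma max_attained n f : (1 <= n)%nat -> exists j, (1 <= j <= n)%nat /\ max_1n n f = f j.
Proof. induction n; intros Hn; [lia|]. destruct n.
  - exists 1%nat. simpl. split; auto; lia.
  - change (max_1n (S (S n)) f) with (Rmax (max_1n (S n) f) (f (S (S n)))).
    destruct (IHn ltac:(lia)) as (j & Hj & E). unfold Rmax. destruct (Rle_dec (max_1n (S n) f) (f (S (S n)))).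
    + exists (S (S n)). split; auto; lia. + exists j. split; auto; lia. Qed.

Lemma H_le_max T P r alpha w Z : good T P r -> posa T alpha -> Hprice T P r alpha w Z <= Hinf T Z.
Proof. intros G Ha. pose proof G as (HT & HP & HS & _). replace (Hinf T Z) with (Hinf T Z + 0) by ring.
  apply H_le_of; auto; [lra|].
  pose proof (Uval_ge _ _ _ _ _ _ G Ha (Y0_attain T P r alpha (fun k => - Z k + Hinf T Z) G)).
  eapply Rle_trans; [|apply H]. unfold Expect. rewrite Ropp_0. apply s1_nonneg. intros k Hk.
  pose proof (max_ge (T+1) Z ltac:(lia) k Hk). fold (Hinf T Z) in H0. pose proof (HP k Hk).
  apply Rmult_le_pos; [lra|]. unfold uexp. pose proof (Ha T ltac:(lia)).
  apply Rmult_le_pos; [left; apply Rinv_0_lt_compat; lra|].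
  assert (exp (- alpha T * (- Z k + Hinf T Z)) <= exp 0) by (apply exp_le'; nra). rewrite exp_0 in H3. lra.
Qed.

Lemma H_le_b T P r alpha w Z B : good T P r -> posa T alpha ->
  (forall k, (1 <= k <= T + 1)%nat -> Rabs (- Z k + Expect T P Z) <= B) -> alpha T * B <= 1/2 ->
  Hprice T P r alpha w Z <= Expect T P Z + 2 * alpha T * B ^ 2.
Proof. intros G Ha HB Hab. pose proof G as (HT & HP & HS & _). pose proof (Ha T ltac:(lia)) as HaT.
  assert (B0 : 0 <= B) by (pose proof (HB 1%nat ltac:(lia)); pose proof (Rabs_pos (- Z 1%nat + Expect T P Z)); lra).
  apply H_le_of; auto; [nra|].
  pose proof (Uval_ge _ _ _ _ _ _ G Ha (Y0_attain T P r alpha (fun k => - Z k + Expect T P Z) G)).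
  eapply Rle_trans; [|apply H].
  set (W := fun k => - Z k + Expect T P Z).
  assert (EW : Expect T P W = 0).
  { unfold W. rewrite Expect_plus, Expect_const by auto.
    rewrite (Expect_ext _ _ _ (fun k => (-1) * Z k)), Expect_scal by (intros; ring). ring. }
  assert (Expect T P (fun k => W k + (- (2 * alpha T * B ^ 2))) <= Expect T P (fun k => uexp alpha T (W k))).
  { apply Expect_le. - intros; left; auto.
    - intros k Hk. pose proof (HB k Hk) as Hw. change (Rabs (W k) <= B) in Hw. unfold uexp.
      pose proof (Rle_abs (W k)) as Hw1. pose proof (Rle_abs (- W k)) as Hw2. rewrite Rabs_Ropp in Hw2.
      assert (alpha T * (- W k) <= alpha T * B) by (apply Rmult_le_compat_l; lra).
      pose proof (exp_quad (- alpha T * W k) ltac:(lra)).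
      assert (W k ^ 2 <= B ^ 2) by nra.
      assert (alpha T ^ 2 * W k ^ 2 <= alpha T ^ 2 * B ^ 2) by (apply Rmult_le_compat_l; nra).
      assert (Hm : alpha T * (W k - 2 * alpha T * B ^ 2) <= 1 - exp (- alpha T * W k)) by nra.
      apply (Rmult_le_compat_l (/ alpha T)) in Hm; [|left; apply Rinv_0_lt_compat; lra].
      rewrite <- Rmult_assoc, Rinv_l in Hm; lra. }
  rewrite Expect_plus, Expect_const, EW in H0 by auto. unfold W in *. cbv beta in *. lra.
Qed.

Definition ap (alpha : nat -> R) p := fun t => p * alpha t.

Lemma posa_ap T alpha p : posa T alpha -> 0 < p -> posa T (ap alpha p).
Proof. intros Ha Hp t Ht. unfold ap. pose proof (Ha t Ht). nra. Qed.

Lemma Kinv_ap T alpha p : posa T alpha -> 0 < p -> Kinv T (ap alpha p) = Kinv T alpha / p.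
Proof. intros Ha Hp. unfold Kinv, ap. rewrite (s1_ext _ _ (fun t => / p * / alpha t)).
  - rewrite s1_scal. field. lra.
  - intros t Ht. pose proof (Ha t Ht). field. split; lra. Qed.

Lemma loss_attain T P r alpha W Y : good T P r -> adapted T Y -> budget T P r Y W ->
  attainable T P r alpha W (Kinv T alpha - loss T P r alpha Y).
Proof. intros G H1 H2. pose proof G as (_ & _ & HS & _). exists Y. repeat split; auto.
  rewrite util_loss; auto. Qed.

Lemma Vz_scale T P r alpha Z p p' Zb : good T P r -> posa T alpha -> 0 < p -> 0 < p' ->
  (forall k, (1 <= k <= T + 1)%nat -> Rabs (Z k) <= Zb) ->
  Vz T P r (ap alpha p') Z <= p / p' * exp (alpha T * Zb * Rabs (p' - p)) * Vz T P r (ap alpha p) Z.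
Proof. intros G Ha Hp Hp' HZ. pose proof G as (HT & HP & HS & HB).
  pose proof (posa_ap T alpha p Ha Hp) as Hap. pose proof (posa_ap T alpha p' Ha Hp') as Hap'.
  set (rho := p / p' * exp (alpha T * Zb * Rabs (p' - p))).
  assert (Hrho : 0 < rho) by (unfold rho; pose proof (exp_pos (alpha T * Zb * Rabs (p' - p))); apply Rmult_lt_0_compat; [apply Rdiv_lt_0_compat|]; lra).
  assert (Hrho1 : p / p' <= rho).
  { unfold rho. pose proof (exp_ineq1_le (alpha T * Zb * Rabs (p' - p))).
    assert (0 <= alpha T * Zb * Rabs (p' - p)).
    { pose proof (Ha T ltac:(lia)). pose proof (HZ 1%nat ltac:(lia)). pose proof (Rabs_pos (Z 1%nat)).
      pose proof (Rabs_pos (p' - p)). apply Rmult_le_pos; [|lra]. apply Rmult_le_pos; lra. }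
    assert (0 < p / p') by (apply Rdiv_lt_0_compat; lra). nra. }
  set (K := Kinv T (ap alpha p)). set (K' := Kinv T (ap alpha p')).
  assert (Hmain : forall v, attainable T P r (ap alpha p) (fun k => - Z k) v ->
     Vz T P r (ap alpha p') Z <= rho * (K - v)).
  { intros v (Y & HY1 & HY2 & ->). rewrite util_loss by auto. fold K.
    set (Y' := fun t k => p / p' * Y t k + (if Nat.eqb t T then - (1 - p / p') * Bdisc r T * Z k else 0)).
    assert (HA : adapted T Y').
    { intros t k k' Ht Hk Hk' H1 H2. unfold Y'. destruct (Nat.eqb_spec t T).
      - subst. replace k with (T+1)%nat by lia. replace k' with (T+1)%nat by lia. auto.
      - rewrite (HY1 t k k'); auto. }
    assert (HBu : budget T P r Y' (fun k => - Z k)).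
    { intros k Hk Hpk. rewrite (s1_ext _ _ (fun t => p / p' * (Y t k / Bdisc r t) +
          (if Nat.eqb t T then - (1 - p / p') * Z k else 0))).
      - rewrite s1_plus, s1_scal, HY2 by auto. rewrite s1_last; [| auto |].
        2:{ intros t Ht; destruct (Nat.eqb_spec t T); [lia|auto]. }
        rewrite Nat.eqb_refl. field. lra.
      - intros t Ht. unfold Y'. pose proof (HB t Ht). destruct (Nat.eqb_spec t T).
        + subst. field. split; lra. + field. lra. }
    pose proof (Uval_ge _ _ _ _ _ _ G Hap' (loss_attain T P r (ap alpha p') _ Y' G HA HBu)).
    unfold Vz. fold K'. fold K' in H.
    enough (loss T P r (ap alpha p') Y' <= rho * loss T P r (ap alpha p) Y) by lra.
    unfold loss. rewrite <- s1_scal. apply s1_le. intros t Ht. rewrite <- Expect_scal.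
    apply Expect_le; [intros; left; auto|]. intros k Hk. unfold ap, Y'.
    pose proof (HB t Ht). pose proof (Ha t Ht).
    assert (E : / (p' * alpha t) = p / p' * / (p * alpha t)) by (field; lra).
    rewrite E. pose proof (Rinv_0_lt_compat (p * alpha t) ltac:(nra)).
    destruct (Nat.eqb_spec t T).
    - subst t. replace (- (p' * alpha T) * ((p / p' * Y T k + - (1 - p / p') * Bdisc r T * Z k) / Bdisc r T))
        with (- (p * alpha T) * (Y T k / Bdisc r T) + (p' - p) * alpha T * Z k) by (field; lra).
      rewrite exp_plus. unfold rho.
      assert (exp ((p' - p) * alpha T * Z k) <= exp (alpha T * Zb * Rabs (p' - p))).
      { apply exp_le'. pose proof (Rle_abs ((p' - p) * Z k)). rewrite Rabs_mult in H3.
        pose proof (HZ k Hk). pose proof (Rabs_pos (p' - p)).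
        assert (Rabs (p' - p) * Rabs (Z k) <= Rabs (p' - p) * Zb) by (apply Rmult_le_compat_l; lra).
        assert (alpha T * ((p' - p) * Z k) <= alpha T * (Rabs (p' - p) * Zb)) by (apply Rmult_le_compat_l; lra).
        nra. }
      pose proof (exp_pos (- (p * alpha T) * (Y T k / Bdisc r T))).
      pose proof (exp_pos ((p' - p) * alpha T * Z k)).
      assert (0 < p / p') by (apply Rdiv_lt_0_compat; lra).
      assert (0 < p / p' * / (p * alpha T) * exp (- (p * alpha T) * (Y T k / Bdisc r T))).
      { apply Rmult_lt_0_compat; [apply Rmult_lt_0_compat|]; lra. }
      replace (p / p' * / (p * alpha T) * (exp (- (p * alpha T) * (Y T k / Bdisc r T)) * exp ((p' - p) * alpha T * Z k)))
        with ((p / p' * / (p * alpha T) * exp (- (p * alpha T) * (Y T k / Bdisc r T))) * exp ((p' - p) * alpha T * Z k)) by ring.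
      replace (p / p' * exp (alpha T * Zb * Rabs (p' - p)) * (/ (p * alpha T) * exp (- (p * alpha T) * (Y T k / Bdisc r T))))
        with ((p / p' * / (p * alpha T) * exp (- (p * alpha T) * (Y T k / Bdisc r T))) * exp (alpha T * Zb * Rabs (p' - p))) by ring.
      apply Rmult_le_compat_l; lra.
    - replace (- (p' * alpha t) * ((p / p' * Y t k + 0) / Bdisc r t))
        with (- (p * alpha t) * (Y t k / Bdisc r t)) by (field; lra).
      pose proof (exp_pos (- (p * alpha t) * (Y t k / Bdisc r t))).
      assert (0 <= / (p * alpha t) * exp (- (p * alpha t) * (Y t k / Bdisc r t))) by (left; apply Rmult_lt_0_compat; lra).
      rewrite Rmult_assoc. apply Rmult_le_compat_r; lra. }
  assert (Uval T P r (ap alpha p) (fun k => - Z k) <= K - Vz T P r (ap alpha p') Z / rho).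
  { apply Uval_le; auto. intros v Hv. pose proof (Hmain v Hv).
    apply (Rmult_le_reg_l rho); auto. unfold Rdiv. 
    replace (rho * (K - Vz T P r (ap alpha p') Z * / rho)) with (rho * K - Vz T P r (ap alpha p') Z) by (field; lra).
    lra. }
  unfold Vz at 2. fold K.
  assert (Vz T P r (ap alpha p') Z / rho <= K - Uval T P r (ap alpha p) (fun k => - Z k)) by lra.
  apply (Rmult_le_compat_l rho) in H0; [|lra]. unfold Rdiv in H0.
  rewrite <- Rmult_assoc, (Rmult_comm rho), Rmult_assoc, Rinv_r, Rmult_1_r in H0; lra.
Qed.

Definition Lfun T P r alpha Z K p := ln (p * Vz T P r (ap alpha p) Z / K).

Lemma L_lip T P r alpha Z p p' Zb : good T P r -> posa T alpha -> 0 < p -> 0 < p' ->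
  (forall k, (1 <= k <= T + 1)%nat -> Rabs (Z k) <= Zb) ->
  Lfun T P r alpha Z (Kinv T alpha) p' - Lfun T P r alpha Z (Kinv T alpha) p <= alpha T * Zb * Rabs (p' - p).
Proof. intros G Ha Hp Hp' HZ. pose proof G as (HT & _).
  pose proof (Vz_scale T P r alpha Z p p' Zb G Ha Hp Hp' HZ).
  pose proof (Vz_pos T P r _ Z G (posa_ap T alpha p Ha Hp)).
  pose proof (Vz_pos T P r _ Z G (posa_ap T alpha p' Ha Hp')).
  pose proof (Kinv_pos T alpha HT Ha).
  set (V := Vz T P r (ap alpha p) Z) in *. set (V' := Vz T P r (ap alpha p') Z) in *.
  set (K := Kinv T alpha) in *. set (e := exp (alpha T * Zb * Rabs (p' - p))) in *.
  assert (He : 0 < e) by apply exp_pos.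
  assert (p' * V' / K <= e * (p * V / K)).
  { apply (Rmult_le_compat_l p') in H; [|lra].
    replace (p' * (p / p' * e * V)) with (e * (p * V)) in H by (field; lra).
    unfold Rdiv. rewrite <- Rmult_assoc. apply Rmult_le_compat_r; [left; apply Rinv_0_lt_compat; lra|lra]. }
  apply ln_le' in H3; [|apply Rdiv_lt_0_compat; nra].
  unfold Lfun. fold V V' K. rewrite ln_mult in H3 by (auto; apply Rdiv_lt_0_compat; nra).
  unfold e in H3. rewrite ln_exp in H3. lra.
Qed.

Lemma H_ap T P r alpha w Z p : good T P r -> posa T alpha -> 0 < p ->
  Hprice T P r (ap alpha p) w Z = Kinv T alpha / p * Lfun T P r alpha Z (Kinv T alpha) p.
Proof. intros G Ha Hp. pose proof G as (HT & _). pose proof (Kinv_pos T alpha HT Ha).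
  rewrite H_formula by (auto; apply posa_ap; auto). rewrite Kinv_ap by auto.
  unfold Lfun. f_equal. f_equal. field. lra. Qed.

Lemma cont_of_lip (f : R -> R) a Lc : 0 < a -> 0 <= Lc ->
  (forall x y, 0 < x -> 0 < y -> f x - f y <= Lc * Rabs (x - y)) -> continuity_pt f a.
Proof. intros Ha HL Hf. unfold continuity_pt, continue_in, limit1_in, limit_in. intros eps Heps.
  exists (Rmin (a/2) (eps/(Lc+1))). split.
  - apply Rmin_pos; [lra|apply Rdiv_lt_0_compat; lra].
  - intros x [_ Hx]. simpl in *. unfold R_dist in *.
    pose proof (Rmin_l (a/2) (eps/(Lc+1))). pose proof (Rmin_r (a/2) (eps/(Lc+1))).
    assert (Hx0 : 0 < x) by (pose proof (Rle_abs (a - x)); rewrite Rabs_minus_sym in Hx; lra).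
    pose proof (Hf x a Hx0 Ha). pose proof (Hf a x Ha Hx0). rewrite Rabs_minus_sym in H2.
    pose proof (Rabs_pos (x - a)).
    assert (Rabs (x - a) * (Lc + 1) < eps).
    { apply (Rmult_lt_compat_r (Lc + 1)) in Hx; [|lra]. eapply Rlt_le_trans; [apply Hx|].
      eapply Rle_trans; [apply Rmult_le_compat_r; [lra|apply H0]|]. right; field; lra. }
    apply Rabs_def1; nra.
Qed.

Definition delta_b B eps := eps / ((B + 1) * (2 * eps + 4 * (B + 1))).

Lemma Hb_core T P r alpha w Z B eps : good T P r -> posa T alpha -> 0 < eps -> 0 <= B ->
  (forall k, (1 <= k <= T + 1)%nat -> Rabs (- Z k + Expect T P Z) <= B) ->
  alpha T <= delta_b B eps -> Hprice T P r alpha w Z < Expect T P Z + eps.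
Proof. intros G Ha He HB0 HB Hd. pose proof G as (HT & _). pose proof (Ha T ltac:(lia)) as HaT.
  set (D := delta_b B eps) in *.
  assert (HD : D * (B + 1) * (2 * eps + 4 * (B + 1)) = eps) by (unfold D, delta_b; field; nra).
  assert (Hu : D * (B + 1) <= 1/2) by nra.
  assert (Hu2 : 4 * (D * (B + 1)) * (B + 1) <= eps) by nra.
  assert (alpha T * B <= 1/2) by nra.
  pose proof (H_le_b T P r alpha w Z B G Ha HB H).
  assert (alpha T * B ^ 2 <= D * (B + 1) * (B + 1)) by nra. lra.
Qed.

Lemma Hc_core T P r alpha w Z j : good T P r -> posa T alpha -> (1 <= j <= T + 1)%nat ->
  Hinf T Z = Z j -> Hinf T Z + Kinv T alpha * ln (P j) <= Hprice T P r alpha w Z.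
Proof. intros G Ha Hj HM. apply H_ge_of; auto. apply Uval_le; auto. intros v Hv.
  eapply util_le_single; eauto. rewrite HM. lra. Qed.

Lemma good_of T P r : (1 <= T)%nat -> is_atom_law T P -> (forall k, (1 <= k <= T)%nat -> 0 <= r k) ->
  (forall t, (t < T)%nat -> 0 < qprob T P t < 1) -> good T P r.
Proof. intros HT [_ HS] Hr Hq.
  assert (Hsv : forall t, (t <= T)%nat -> 0 < surv T P t).
  { induction t; intros Ht. - unfold surv; simpl; lra.
    - pose proof (IHt ltac:(lia)). pose proof (Hq t ltac:(lia)). unfold qprob in H0.
      unfold surv in *. simpl. set (s := 1 - sum_1n t P) in *.
      assert (P (S t) = P (S t) / s * s) by (field; lra). assert (P (S t) < s) by nra. unfold s in *. lra. }
  split; [auto|split; [|split; [auto|]]].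
  - intros k Hk. destruct (Nat.eq_dec k (T+1)).
    + subst. pose proof (Hsv T ltac:(lia)). unfold surv in H. rewrite Nat.add_1_r in *. simpl in HS. lra.
    + destruct k; [lia|]. pose proof (Hsv k ltac:(lia)). pose proof (Hq k ltac:(lia)). unfold qprob in H0.
      set (s := surv T P k) in *. assert (P (S k) = P (S k) / s * s) by (field; lra). nra.
  - intros t Ht. unfold Bdisc. induction t; simpl; [lra|].
    destruct t. + simpl. pose proof (Hr 1%nat ltac:(lia)). lra.
    + pose proof (IHt ltac:(lia)). pose proof (Hr (S (S t)) ltac:(lia)). nra.
Qed.

Theorem theorem4p6 (T : nat) (P : nat -> R) (r : nat -> R) (Z : nat -> R) (w : R)
  (hT : (1 <= T)%nat)
  (hP : is_atom_law T P)
  (hr : forall k, (1 <= k <= T)%nat -> 0 <= r k)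
  (hq : forall t, (t < T)%nat -> 0 < qprob T P t < 1) :
  (* (a) *)
  (forall alpha : nat -> R, (forall t, (1 <= t <= T)%nat -> 0 < alpha t) ->
     Expect T P Z <= Hprice T P r alpha w Z <= Hinf T Z) /\
  (* (b) alpha -> 0+ *)
  (forall eps, 0 < eps -> exists delta, 0 < delta /\
     forall alpha : nat -> R, (forall t, (1 <= t <= T)%nat -> 0 < alpha t < delta) ->
       Rabs (Hprice T P r alpha w Z - Expect T P Z) < eps) /\
  (* (c) alpha -> infinity *)
  (forall eps, 0 < eps -> exists M,
     forall alpha : nat -> R, (forall t, (1 <= t <= T)%nat -> M < alpha t) ->
       Rabs (Hprice T P r alpha w Z - Hinf T Z) < eps) /\
  (* (d) *)
  (forall pi, Expect T P Z < pi < Hinf T Z ->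
     forall alpha : nat -> R, (forall t, (1 <= t <= T)%nat -> 0 < alpha t) ->
       exists p, 0 < p /\ pi = Hprice T P r (fun t => p * alpha t) w Z).
Proof.
  pose proof (good_of T P r hT hP hr hq) as G. pose proof G as (_ & HP & HS & _).
  set (Zb := sum_1n (T+1) (fun k => Rabs (Z k))).
  assert (HZ : forall k, (1 <= k <= T + 1)%nat -> Rabs (Z k) <= Zb).
  { intros k Hk. apply (s1_ge_term (T+1) (fun k => Rabs (Z k))); auto. intros; apply Rabs_pos. }
  set (B := Zb + Rabs (Expect T P Z)).
  assert (HB : forall k, (1 <= k <= T + 1)%nat -> Rabs (- Z k + Expect T P Z) <= B).
  { intros k Hk. pose proof (Rabs_triang (- Z k) (Expect T P Z)). rewrite Rabs_Ropp in H.
    pose proof (HZ k Hk). unfold B. lra. }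
  assert (HB0 : 0 <= B) by (pose proof (HB 1%nat ltac:(lia)); pose proof (Rabs_pos (- Z 1%nat + Expect T P Z)); lra).
  destruct (max_attained (T+1) Z ltac:(lia)) as (j & Hj & HMj). fold (Hinf T Z) in HMj.
  pose proof (HP j Hj) as HPj.
  set (lj := Rabs (ln (P j)) + 1).
  assert (Hlj : 0 < lj) by (unfold lj; pose proof (Rabs_pos (ln (P j))); lra).
  assert (Hlnj : - Rabs (ln (P j)) <= ln (P j)).
  { pose proof (Rle_abs (- ln (P j))). rewrite Rabs_Ropp in H. lra. }
  split; [|split; [|split]].
  - intros alpha Ha. split; [apply H_ge_E | apply H_le_max]; auto.
  - intros eps He. exists (delta_b B eps). split.
    + unfold delta_b. apply Rdiv_lt_0_compat; [auto|]. nra.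
    + intros alpha Ha. assert (Ha' : posa T alpha) by (intros t Ht; apply Ha; auto).
      pose proof (H_ge_E T P r alpha w Z G Ha').
      pose proof (Hb_core T P r alpha w Z B eps G Ha' He HB0 HB ltac:(left; apply Ha; lia)).
      apply Rabs_def1; lra.
  - intros eps He. exists (2 * INR T * lj / eps). intros alpha Ha.
    assert (HTr : 1 <= INR T) by (apply (le_INR 1); lia).
    assert (HM0 : 0 < 2 * INR T * lj / eps) by (apply Rdiv_lt_0_compat; nra).
    assert (Ha' : posa T alpha) by (intros t Ht; pose proof (Ha t Ht); lra).
    pose proof (Hc_core T P r alpha w Z j G Ha' Hj HMj).
    pose proof (H_le_max T P r alpha w Z G Ha').
    pose proof (Kinv_pos T alpha hT Ha') as HK.
    assert (HKb : Kinv T alpha <= INR T * / (2 * INR T * lj / eps)).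
    { unfold Kinv. rewrite <- s1_const. apply s1_le. intros t Ht. left. apply Rinv_lt_contravar; auto.
      pose proof (Ha t Ht); nra. }
    replace (INR T * / (2 * INR T * lj / eps)) with (eps / (2 * lj)) in HKb by (field; lra).
    assert (Kinv T alpha * lj <= eps / 2).
    { apply (Rmult_le_compat_r lj) in HKb; [|lra]. replace (eps / (2 * lj) * lj) with (eps / 2) in HKb by (field; lra). lra. }
    assert (Kinv T alpha * ln (P j) >= - (eps / 2)) by (unfold lj in H1; nra).
    apply Rabs_def1; lra.
  - intros pi [Hpi1 Hpi2] alpha Ha. assert (Ha' : posa T alpha) by exact Ha.
    pose proof (Kinv_pos T alpha hT Ha') as HK. set (K := Kinv T alpha) in *.
    pose proof (Ha T ltac:(lia)) as HaT.
    set (f := fun p => Lfun T P r alpha Z K p - p * pi / K).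
    set (d := pi - Expect T P Z).
    assert (Hd : 0 < d) by (unfold d; lra).
    assert (Hdb : 0 < delta_b B d) by (unfold delta_b; apply Rdiv_lt_0_compat; [auto|nra]).
    set (p0 := delta_b B d / alpha T).
    assert (Hp0 : 0 < p0) by (apply Rdiv_lt_0_compat; auto).
    set (p1 := p0 + K * lj / (Hinf T Z - pi)).
    assert (Hp1' : 0 < K * lj / (Hinf T Z - pi)) by (apply Rdiv_lt_0_compat; nra).
    assert (Hp01 : p0 < p1) by (unfold p1; lra).
    assert (HfH : forall p, 0 < p -> Hprice T P r (ap alpha p) w Z = K / p * (f p) + pi).
    { intros p Hp. rewrite H_ap by auto. unfold f. fold K. field. lra. }
    assert (Hf0 : f p0 < 0).
    { pose proof (Hb_core T P r (ap alpha p0) w Z B d G (posa_ap T alpha p0 Ha' Hp0) Hd HB0 HB).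
      unfold ap at 1 in H. unfold p0 in H at 1.
      replace (delta_b B d / alpha T * alpha T) with (delta_b B d) in H by (field; lra).
      specialize (H ltac:(lra)). rewrite HfH in H by auto. unfold d in H.
      assert (K / p0 * f p0 < 0) by lra.
      assert (0 < K / p0) by (apply Rdiv_lt_0_compat; lra). nra. }
    assert (Hf1 : 0 < f p1).
    { pose proof (Hc_core T P r (ap alpha p1) w Z j G (posa_ap T alpha p1 Ha' ltac:(lra)) Hj HMj).
      rewrite Kinv_ap in H by (auto; lra). fold K in H. rewrite HfH in H by lra.
      assert (HKp : K * lj < p1 * (Hinf T Z - pi)).
      { unfold p1. assert (K * lj = K * lj / (Hinf T Z - pi) * (Hinf T Z - pi)) by (field; lra). nra. }
      assert (K / p1 * lj < Hinf T Z - pi).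
      { apply (Rmult_lt_reg_l p1); [lra|]. replace (p1 * (K / p1 * lj)) with (K * lj) by (field; lra). lra. }
      assert (0 < K / p1) by (apply Rdiv_lt_0_compat; lra).
      assert (K / p1 * ln (P j) > - (Hinf T Z - pi)) by (unfold lj in H0; nra).
      assert (0 < K / p1 * f p1) by lra. nra. }
    destruct (IVT_interv f p0 p1) as (z & Hz & Hfz); auto.
    + intros a Ha0. apply (cont_of_lip f a (alpha T * Zb + Rabs (pi / K))); [lra| |].
      * pose proof (Rabs_pos (pi / K)). pose proof (Rabs_pos (Z 1%nat)). pose proof (HZ 1%nat ltac:(lia)). nra.
      * intros x y Hx Hy. unfold f. pose proof (L_lip T P r alpha Z y x Zb G Ha' Hy Hx HZ). fold K in H.
        pose proof (Rle_abs ((y - x) * (pi / K))). rewrite Rabs_mult, (Rabs_minus_sym y x) in H0.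
        replace (x * pi / K) with (x * (pi / K)) by (field; lra).
        replace (y * pi / K) with (y * (pi / K)) by (field; lra). nra.
    + exists z. split; [lra|]. unfold ap in HfH. rewrite (HfH z ltac:(lra)), Hfz. ring.
Qed.
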